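(* Let $\theta^*\in\mathbb{R}^n$, let $\phi:\mathbb{R}_{\ge0}\to\mathbb{R}^n$ be piecewise continuous and bounded, and $y^*(t):=\phi^T(t)\theta^*$. Let $t_1,\dots,t_N\ge0$ be such that $\mathcal{D}=[\phi(t_1),\dots,\phi(t_N)]$ has rank $n$. Let $\beta,\gamma,\mu>0$ with $\beta\ge2\gamma/\mu$, $\mathcal{N}_t:=1+\mu\phi^T(t)\phi(t)$, and $$B(\theta,\mu):=\sum_{k=1}^N\frac{\phi(t_k)}{1+\mu\phi^T(t_k)\phi(t_k)}\big(\phi^T(t_k)\theta-y^*(t_k)\big).$$ Then $(\theta^*,\theta^* )$ is uniformly globally asymptotically stable for the system in $(\theta,\vartheta)\in\mathbb{R}^{2n}$ $$\dot\theta=-\beta(\theta-\vartheta)\mathcal{N}_t,\qquad\dot\vartheta=-\gamma\Big(\phi(t)\big(\phi^T(t)\theta-y^*(t)\big)+\mathcal{N}_tB(\theta,\mu)\Big).$$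
   Context: No persistent excitation is assumed. For a system $\dot x=f(x,t)$ with equilibrium $x^*$: uniformly globally stable (UGS) means there is a class-$\mathcal{K}_\infty$ function $\kappa$ with $|x(t)-x^*|\le\kappa(|x_\circ-x^*|)$ for all $t\ge t_\circ$, for every solution from every $(x_\circ,t_\circ)$; uniformly globally attractive (UGA) means for each $r,\sigma>0$ there is $T'>0$ with $|x_\circ-x^*|\le r\Rightarrow|x(t)-x^*|\le\sigma$ for all $t\ge t_\circ+T'$, uniformly in $t_\circ\ge0$; UGAS means UGS and UGA. *)

(* Defs.v *)
From HB Require Import structures.
From mathcomp Require Import all_boot all_order all_algebra.
From mathcomp Require Import all_classical all_reals all_analysis.
Set Implicit Arguments. Unset Strict Implicit. Unset Printing Implicit Defensive.
Import Order.TTheory GRing.Theory Num.Theory.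
Import numFieldNormedType.Exports.
Local Open Scope classical_set_scope.
Local Open Scope ring_scope.

Section Defs.
Variable R : realType.

Definition dotv (n : nat) (u v : 'rV[R]_n) : R := \sum_(i < n) u 0 i * v 0 i.

Definition pw_continuous (V : normedModType R) (f : R -> V) : Prop :=
  forall b : R, exists s : seq R,
    (forall t, 0 < t -> t <= b -> t \notin s -> {for t, continuous f}) /\
    (forall t, t \in s -> 0 < t -> exists l : V, f x @[x --> t^'-] --> l) /\
    (forall t, (t \in s) || (t == 0) -> exists l : V, f x @[x --> t^'+] --> l).

Definition bounded_on_nonneg (V : normedModType R) (f : R -> V) : Prop :=
  exists M : R, forall t, 0 <= t -> `|f t| <= M.

(* (Carathéodory) solution on [t0, +oo) of x' = F t x: continuous on [t0,+oo)
   and differentiable with derivative F t (x t) except at finitely many points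
   of each bounded interval. *)
Definition is_solution (X : normedModType R) (F : R -> X -> X) (t0 : R)
    (x : R -> X) : Prop :=
  {within `[t0, +oo[, continuous x} /\
  forall b : R, exists s : seq R,
    forall t, t0 < t -> t < b -> t \notin s -> is_derive t 1 x (F t (x t)).

Definition class_Kinf (kappa : R -> R) : Prop :=
  {within `[0, +oo[, continuous kappa} /\ kappa 0 = 0 /\
  (forall r s, 0 <= r -> r < s -> kappa r < kappa s) /\
  (forall M : R, exists r, 0 <= r /\ M <= kappa r).

Definition UGS (X : normedModType R) (F : R -> X -> X) (xs : X) : Prop :=
  exists kappa : R -> R, class_Kinf kappa /\
    forall (t0 : R) (x : R -> X), 0 <= t0 -> is_solution F t0 x ->
      forall t, t0 <= t -> `|x t - xs| <= kappa `|x t0 - xs|.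

Definition UGA (X : normedModType R) (F : R -> X -> X) (xs : X) : Prop :=
  forall r sigma : R, 0 < r -> 0 < sigma -> exists T : R, 0 < T /\
    forall (t0 : R) (x : R -> X), 0 <= t0 -> is_solution F t0 x ->
      `|x t0 - xs| <= r -> forall t, t0 + T <= t -> `|x t - xs| <= sigma.

Definition UGAS (X : normedModType R) (F : R -> X -> X) (xs : X) : Prop :=
  UGS F xs /\ UGA F xs.

Variables (n N : nat).

Definition data_matrix (phi : R -> 'rV[R]_n) (tk : 'I_N -> R) : 'M[R]_(n, N) :=
  \matrix_(i < n, k < N) phi (tk k) 0 i.

Definition ystar (phi : R -> 'rV[R]_n) (ths : 'rV[R]_n) (t : R) : R :=
  dotv (phi t) ths.

Definition Nt (phi : R -> 'rV[R]_n) (mu t : R) : R :=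
  1 + mu * dotv (phi t) (phi t).

Definition Bfun (phi : R -> 'rV[R]_n) (tk : 'I_N -> R) (ths : 'rV[R]_n)
    (th : 'rV[R]_n) (mu : R) : 'rV[R]_n :=
  \sum_(k < N) ((1 + mu * dotv (phi (tk k)) (phi (tk k)))^-1 *
                 (dotv (phi (tk k)) th - ystar phi ths (tk k))) *: phi (tk k).

Definition sysF (phi : R -> 'rV[R]_n) (tk : 'I_N -> R) (ths : 'rV[R]_n)
    (beta gamma mu : R) (t : R) (x : 'rV[R]_n * 'rV[R]_n)
    : 'rV[R]_n * 'rV[R]_n :=
  let th := x.1 in let vth := x.2 in
  (- (beta * Nt phi mu t) *: (th - vth),
   - gamma *: ((dotv (phi t) th - ystar phi ths t) *: phi t
               + Nt phi mu t *: Bfun phi tk ths th mu)).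

End Defs.

(* Main.v *)
Require Import Defs.
From HB Require Import structures.
From mathcomp Require Import all_boot all_order all_algebra.
From mathcomp Require Import all_classical all_reals all_analysis.
From mathcomp Require Import ring lra.
Import Order.TTheory GRing.Theory Num.Theory.
Import numFieldNormedType.Exports.
Set Implicit Arguments. Unset Strict Implicit.
Local Open Scope classical_set_scope.
Local Open Scope ring_scope.

Section Dot.
Variable R : realType.
Variable n : nat.
Implicit Types u v w : 'rV[R]_n.

Lemma dvC u v : dotv u v = dotv v u.
Proof. by apply: eq_bigr => i _; rewrite mulrC. Qed.

Lemma dvDr u v w : dotv u (v + w) = dotv u v + dotv u w.
Proof. by rewrite /dotv -big_split; apply: eq_bigr => i _; rewrite mxE mulrDr. Qed.

Lemma dvZr u v (c : R) : dotv u (c *: v) = c * dotv u v.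
Proof. by rewrite /dotv mulr_sumr; apply: eq_bigr => i _; rewrite mxE mulrCA. Qed.

Lemma dvNr u v : dotv u (- v) = - dotv u v.
Proof. by rewrite -scaleN1r dvZr mulN1r. Qed.

Lemma dvBr u v w : dotv u (v - w) = dotv u v - dotv u w.
Proof. by rewrite dvDr dvNr. Qed.

Lemma dvDl u v w : dotv (v + w) u = dotv v u + dotv w u.
Proof. by rewrite dvC dvDr !(dvC u). Qed.

Lemma dvBl u v w : dotv (v - w) u = dotv v u - dotv w u.
Proof. by rewrite dvC dvBr !(dvC u). Qed.

Lemma dvZl u v (c : R) : dotv (c *: v) u = c * dotv v u.
Proof. by rewrite dvC dvZr dvC. Qed.

Lemma dv_sumr (I : Type) (r : seq I) (F : I -> 'rV[R]_n) u :
  dotv u (\sum_(i <- r) F i) = \sum_(i <- r) dotv u (F i).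
Proof.
elim: r => [|a r IH]; first by rewrite !big_nil /dotv big1 // => i _; rewrite mxE mulr0.
by rewrite !big_cons dvDr IH.
Qed.

Lemma dv_ge0 u : 0 <= dotv u u.
Proof. by apply: sumr_ge0 => i _; exact: mulr_ge0_le0 || rewrite -expr2 sqr_ge0. Qed.

Lemma entry_sq_le u i : u 0 i ^+ 2 <= dotv u u.
Proof.
rewrite /dotv (bigD1 i) //= -expr2 lerDl.
by apply: sumr_ge0 => j _; rewrite -expr2 sqr_ge0.
Qed.

Lemma entry_le_norm u i : `|u 0 i| <= `|u|.
Proof.
rewrite [leRHS]/Num.Def.normr/= mx_normrE.
apply: le_trans; last exact: (le_bigmax _ _ (0, i)).
by [].
Qed.

Lemma norm_le_entries u M : 0 <= M -> (forall i, `|u 0 i| <= M) -> `|u| <= M.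
Proof.
move=> M0 H; rewrite [leLHS]/Num.Def.normr/= mx_normrE.
apply: bigmax_le => // -[a b] _ /=; by rewrite (ord1 a).
Qed.

Lemma norm_sq_le_dv u : `|u| ^+ 2 <= dotv u u.
Proof.
have E : `|u| = mx_norm u by [].
rewrite E; case: (boolP (mx_norm u == 0)) => [/eqP ->|]; first by rewrite expr0n /= dv_ge0.
move=> /mx_norm_neq0 [[a i] ->] /=; rewrite (ord1 a).
by rewrite real_normK ?num_real // entry_sq_le.
Qed.

Lemma dv_le_norm u : dotv u u <= n%:R * `|u| ^+ 2.
Proof.
apply: (le_trans (y := \sum_(i < n) `|u| ^+ 2)); last first.
  by rewrite sumr_const card_ord mulr_natl.
apply: ler_sum => i _; rewrite -expr2 -real_normK ?num_real //.
by rewrite lerXn2r ?nnegrE ?normr_ge0 // entry_le_norm.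
Qed.

End Dot.

Section CS.
Variable R : realType.

Lemma CS_sum (m : nat) (u v : 'I_m -> R) :
  (\sum_i u i * v i) ^+ 2 <= (\sum_i u i ^+ 2) * (\sum_i v i ^+ 2).
Proof.
set A := \sum_i u i ^+ 2; set B := \sum_i u i * v i; set C := \sum_i v i ^+ 2.
have A0 : 0 <= A by apply: sumr_ge0 => i _; rewrite sqr_ge0.
have key : 0 <= A * (A * C - B ^+ 2).
  have -> : A * (A * C - B ^+ 2) = \sum_i (A * v i - B * u i) ^+ 2.
    have -> : \sum_i (A * v i - B * u i) ^+ 2 =
      \sum_i (A ^+ 2 * v i ^+ 2 - (2 * A * B) * (u i * v i) + B ^+ 2 * u i ^+ 2).
      by apply: eq_bigr => i _; ring.
    rewrite !big_split /= sumrN -!mulr_sumr -/A -/B -/C; ring.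
  by apply: sumr_ge0 => i _; rewrite sqr_ge0.
case: (ltrgtP A 0) => [|Ap|A0'].
- by rewrite ltNge A0.
- by rewrite -subr_ge0; move: key; rewrite pmulr_rge0.
- have u0 : forall i, u i = 0.
    move=> i; apply/eqP; rewrite -sqrf_eq0; apply/eqP.
    move: A0'; rewrite /A => /psumr_eq0P H.
    by apply: H => // j _; rewrite sqr_ge0.
  have -> : B = 0 by rewrite /B big1 // => i _; rewrite u0 mul0r.
  by rewrite expr0n /= A0' mul0r.
Qed.

Lemma CS_dv (n : nat) (u v : 'rV[R]_n) : dotv u v ^+ 2 <= dotv u u * dotv v v.
Proof.
have := @CS_sum n (fun i => u 0 i) (fun i => v 0 i).
have E : forall w : 'rV[R]_n, dotv w w = \sum_i w 0 i ^+ 2.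
  by move=> w; apply: eq_bigr => i _; rewrite expr2.
by rewrite !E.
Qed.

End CS.


Section Deriv.
Variable R : realType.

Lemma is_derive_map (X Y : normedModType R) (L : X -> Y) (f : R -> X) (t : R) (df : X) :
  continuous L -> (forall (c : R) a b, L (c *: (a - b)) = c *: (L a - L b)) ->
  is_derive t 1 f df -> is_derive t 1 (fun s => L (f s)) (L df).
Proof.
move=> cL HL [df1 dfv].
have Hq : (fun h : R => h^-1 *: ((f \o shift t) (h *: 1) - f t)) @ 0^' --> df.
  by rewrite -dfv; exact: df1.
have Hq2 : (fun h : R => h^-1 *: (((fun s => L (f s)) \o shift t) (h *: 1) - L (f t))) @ 0^' --> L df.
  have -> : (fun h : R => h^-1 *: (((fun s => L (f s)) \o shift t) (h *: 1) - L (f t)))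
     = L \o (fun h : R => h^-1 *: ((f \o shift t) (h *: 1) - f t)).
    by apply: funext => h /=; rewrite HL.
  exact: (cvg_comp _ _ Hq (cL df)).
split; first by apply/cvg_ex; exists (L df).
exact: cvg_lim Hq2.
Qed.

Lemma cont_fst (X Y : normedModType R) : continuous (@fst X Y).
Proof. by move=> p; exact: cvg_fst. Qed.
Lemma cont_snd (X Y : normedModType R) : continuous (@snd X Y).
Proof. by move=> p; exact: cvg_snd. Qed.

Lemma is_derive_fst (X Y : normedModType R) (f : R -> X * Y) (t : R) (df : X * Y) :
  is_derive t 1 f df -> is_derive t 1 (fun s => (f s).1) df.1.
Proof. by apply: is_derive_map => //; exact: cont_fst. Qed.

Lemma is_derive_snd (X Y : normedModType R) (f : R -> X * Y) (t : R) (df : X * Y) :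
  is_derive t 1 f df -> is_derive t 1 (fun s => (f s).2) df.2.
Proof. by apply: is_derive_map => //; exact: cont_snd. Qed.

Lemma is_derive_entry n (f : R -> 'rV[R]_n) (t : R) df i :
  is_derive t 1 f df -> is_derive t 1 (fun s => f s 0 i) (df 0 i).
Proof.
apply: (@is_derive_map _ _ (fun M : 'rV[R]_n => M 0 i)).
  exact: coord_continuous.
by move=> c a b; rewrite !mxE.
Qed.

Lemma is_derive_dv n (f g : R -> 'rV[R]_n) (t : R) df dg :
  is_derive t 1 f df -> is_derive t 1 g dg ->
  is_derive t 1 (fun s => dotv (f s) (g s)) (dotv df (g t) + dotv (f t) dg).
Proof.
move=> Hf Hg.
have -> : (fun s => dotv (f s) (g s)) = \sum_(i < n) (fun s => f s 0 i * g s 0 i).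
  by rewrite fct_sumE.
have -> : dotv df (g t) + dotv (f t) dg = \sum_(i < n) (f t 0 i * dg 0 i + g t 0 i * df 0 i).
  by rewrite big_split /= addrC; congr (_ + _); apply: eq_bigr => i _; rewrite mulrC.
apply: is_derive_sum => i.
have := is_deriveM (@is_derive_entry n _ t _ i Hf) (@is_derive_entry n _ t _ i Hg).
by [].
Qed.

Lemma cont_dv (T : topologicalType) n (f g : T -> 'rV[R]_n) x :
  {for x, continuous f} -> {for x, continuous g} ->
  {for x, continuous (fun s => dotv (f s) (g s))}.
Proof.
move=> cf cg.
have -> : (fun s => dotv (f s) (g s)) = \sum_(i < n) (fun s => f s 0 i * g s 0 i).
  by rewrite fct_sumE.
elim/big_ind: _.
- exact: (@cst_continuous _ _ (0:R) x).
- by move=> a b ca cb; exact: continuousD.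
move=> i _; apply: (@continuousM _ _ (fun s => f s 0 i) (fun s => g s 0 i)).
  exact: (continuous_comp cf (@coord_continuous _ 1 n 0 i (f x))).
exact: (continuous_comp cg (@coord_continuous _ 1 n 0 i (g x))).
Qed.

End Deriv.


Section Mono.
Variable R : realType.

Lemma nonincr_fin (g : R -> R) (s : seq R) : forall a b : R, a <= b ->
  {within `[a, b], continuous g} ->
  (forall t, a < t -> t < b -> t \notin s -> exists dg, is_derive t 1 g dg /\ dg <= 0) ->
  g b <= g a.
Proof.
elim: s => [|p s IH] a b ab cg H.
  apply: (@ler0_derive1_le_cc R g a b) => //.
  - move=> t; rewrite in_itv /= => /andP [h1 h2].
    by have [dg [[]]] := H t h1 h2 (negbT (in_nil t)).
  - move=> t; rewrite in_itv /= => /andP [h1 h2].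
    have [dg [hd hle]] := H t h1 h2 (negbT (in_nil t)).
    by rewrite derive1E derive_val.
  - by rewrite in_itv /= lexx ab.
  - by rewrite in_itv /= lexx ab.
have sub : forall c d : R, a <= c -> d <= b -> `[c, d] `<=` `[a, b].
  by move=> c d ac db; apply: subset_itv; rewrite bnd_simp.
case: (boolP ((a < p) && (p < b))) => [/andP [ap pb]|hp].
  apply: (@le_trans _ _ (g p)).
    apply: IH; first exact: ltW.
      by apply: continuous_subspaceW cg; apply: sub => //; exact: ltW.
    move=> t h1 h2 hs; apply: H => //; first exact: lt_trans ap h1.
    by rewrite in_cons negb_or hs andbT gt_eqF.
  apply: IH; first exact: ltW.
    by apply: continuous_subspaceW cg; apply: sub => //; exact: ltW.
  move=> t h1 h2 hs; apply: H => //; first exact: lt_trans h2 pb.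
  by rewrite in_cons negb_or hs andbT lt_eqF.
apply: IH => // t h1 h2 hs; apply: H => //.
rewrite in_cons negb_or hs andbT; apply/eqP => tp; subst t.
by move: hp; rewrite h1 h2.
Qed.

End Mono.


Section Helpers.
Variable R : realType.
Lemma dD (f g : R -> R) (t df dg : R) : is_derive t 1 f df -> is_derive t 1 g dg ->
  is_derive t 1 (fun s => f s + g s) (df + dg).
Proof. move=> H1 H2; exact: is_deriveD. Qed.
Lemma dMul (f g : R -> R) (t df dg : R) : is_derive t 1 f df -> is_derive t 1 g dg ->
  is_derive t 1 (fun s => f s * g s) (f t * dg + g t * df).
Proof. move=> H1 H2; exact: is_deriveM. Qed.
Lemma dZ (f : R -> R) (k t df : R) : is_derive t 1 f df ->
  is_derive t 1 (fun s => k * f s) (k * df).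
Proof. move=> H1; exact: is_deriveZ. Qed.
Lemma dsum m (f : 'I_m -> R -> R) (t : R) (df : 'I_m -> R) :
  (forall i, is_derive t 1 (f i) (df i)) ->
  is_derive t 1 (fun s => \sum_(i < m) f i s) (\sum_(i < m) df i).
Proof. by move=> H; rewrite -fct_sumE; exact: is_derive_sum. Qed.
Lemma dBc n (f : R -> 'rV[R]_n) (c : 'rV[R]_n) (t : R) df : is_derive t 1 f df ->
  is_derive t 1 (fun s => f s - c) df.
Proof.
move=> H; have := is_deriveB H (is_derive_cst c t 1).
by rewrite subr0.
Qed.
End Helpers.

Section Main.
Variables (R : realType) (n N : nat) (ths : 'rV[R]_n)
    (phi : R -> 'rV[R]_n) (tk : 'I_N -> R) (beta gamma mu : R).
Hypotheses (hb : 0 < beta) (hg : 0 < gamma) (hm : 0 < mu)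
  (hbg : 2 * gamma / mu <= beta).

Let phk k := phi (tk k).
Let wk k := (1 + mu * dotv (phk k) (phk k))^-1.

Definition Lyap (a b : 'rV[R]_n) : R :=
  (2 * gamma)^-1 * (dotv b b + dotv (a - b) (a - b)) +
  beta^-1 * \sum_(k < N) wk k * (dotv (phk k) a * dotv (phk k) a).

Definition Vf (p : 'rV[R]_n * 'rV[R]_n) := Lyap (p.1 - ths) (p.2 - ths).


Definition Draw (a0 b0 da db : 'rV[R]_n) : R :=
  (2 * gamma)^-1 * (dotv db b0 + dotv b0 db +
     (dotv (da - db) (a0 - b0) + dotv (a0 - b0) (da - db))) +
  beta^-1 * \sum_(k < N) wk k * (dotv (phk k) a0 * (dotv 0 a0 + dotv (phk k) da)
                                 + dotv (phk k) a0 * (dotv 0 a0 + dotv (phk k) da)).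

Lemma deriv_V (x : R -> 'rV[R]_n * 'rV[R]_n) (t : R) dx :
  is_derive t 1 x dx ->
  is_derive t 1 (fun s => Vf (x s)) (Draw ((x t).1 - ths) ((x t).2 - ths) dx.1 dx.2).
Proof.
move=> Hx.
have Ha := dBc ths (is_derive_fst Hx).
have Hb := dBc ths (is_derive_snd Hx).
have He := is_deriveB Ha Hb.
eapply is_derive_eq.
  rewrite /Vf /Lyap.
  apply: dD; apply: dZ.
    apply: dD; first exact: (is_derive_dv Hb Hb).
    exact: (is_derive_dv He He).
  apply: dsum => k; apply: dZ.
  apply: dMul; exact: (is_derive_dv (is_derive_cst (phk k) t 1) Ha).
by [].
Qed.

Lemma dv0l (u : 'rV[R]_n) : dotv 0 u = 0.
Proof. by rewrite /dotv big1 // => i _; rewrite mxE mul0r. Qed.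

Lemma alg (t : R) (th vth : 'rV[R]_n) :
  Draw (th - ths) (vth - ths) (- (beta * Nt phi mu t) *: (th - vth))
     (- gamma *: ((dotv (phi t) th - ystar phi ths t) *: phi t
               + Nt phi mu t *: Bfun phi tk ths th mu))
  <= - (mu^-1 * dotv ((th - ths) - (vth - ths)) ((th - ths) - (vth - ths))
        + \sum_(k < N) wk k * (dotv (phk k) (th - ths) * dotv (phk k) (th - ths))).
Proof.
set a0 := th - ths. set b0 := vth - ths.
set da := - (beta * Nt phi mu t) *: (th - vth).
set db := - gamma *: _.
set p := phi t.
set Nt0 := Nt phi mu t.
have hNt : Nt0 = 1 + mu * dotv p p by [].
set c := fun k => dotv (phk k) a0.
set d := fun k => dotv (phk k) b0.
set Xa := \sum_(k < N) wk k * (c k * c k).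
set Xb := \sum_(k < N) wk k * (c k * d k).
set bvec := \sum_(k < N) (wk k * c k) *: phk k.
set pa := dotv p a0. set pb := dotv p b0.
set E := dotv (a0 - b0) (a0 - b0).
have e1 : th - vth = a0 - b0 by rewrite /a0 /b0 opprB addrA subrK.
have e2 : dotv p th - ystar phi ths t = pa by rewrite /ystar /pa /a0 dvBr.
have e3 : Bfun phi tk ths th mu = bvec.
  by apply: eq_bigr => k _; rewrite /ystar -dvBr.
have hbv : forall y, dotv y bvec = \sum_(k < N) wk k * c k * dotv (phk k) y.
  move=> y; rewrite /bvec dv_sumr; apply: eq_bigr => k _.
  by rewrite dvZr dvC.
have ba : dotv a0 bvec = Xa.
  by rewrite hbv; apply: eq_bigr => k _; rewrite -mulrA.
have bb : dotv b0 bvec = Xb.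
  by rewrite hbv; apply: eq_bigr => k _; rewrite -mulrA.
have hdb : db = - gamma *: (pa *: p + Nt0 *: bvec) by rewrite /db e2 e3.
have hda : da = - (beta * Nt0) *: (a0 - b0) by rewrite /da e1.
have P1 : dotv b0 db = - gamma * (pa * pb + Nt0 * Xb).
  by rewrite hdb dvZr dvDr !dvZr bb (dvC b0 p).
have P3 : dotv (a0 - b0) (da - db) =
   - (beta * Nt0) * E + gamma * (pa * (pa - pb) + Nt0 * (Xa - Xb)).
  rewrite hda hdb dvBr !dvZr -/E dvDr !dvZr (dvBl p a0 b0) (dvBl bvec a0 b0) ba bb (dvC a0 p) (dvC b0 p) -/pa -/pb.
  ring.
have P5 : \sum_(k < N) wk k * (dotv (phk k) a0 * (dotv 0 a0 + dotv (phk k) da)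
             + dotv (phk k) a0 * (dotv 0 a0 + dotv (phk k) da))
          = - (2 * beta * Nt0) * (Xa - Xb).
  rewrite /Xa /Xb -sumrB mulr_sumr; apply: eq_bigr => k _.
  rewrite dv0l add0r hda dvZr dvBr -/(c k) -/(d k); ring.
rewrite /Draw P5 (dvC db b0) P1 (dvC (da - db) (a0 - b0)) P3.
have pp0 : 0 <= dotv p p by apply: dv_ge0.
have E0 : 0 <= E by apply: dv_ge0.
have Xa0 : 0 <= Xa.
  apply: sumr_ge0 => k _; apply: mulr_ge0; last by rewrite -expr2 sqr_ge0.
  rewrite invr_ge0 addr_ge0 //; apply: mulr_ge0; [exact: ltW | exact: dv_ge0].
have CS : (pa - pb) ^+ 2 <= dotv p p * E.
  by rewrite /pa /pb -dvBr CS_dv.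
have hbg' : 2 * mu^-1 <= beta * gamma^-1.
  by rewrite ler_pdivlMr // mulrAC.
have g0 : gamma != 0 by rewrite gt_eqF.
have b0' : beta != 0 by rewrite gt_eqF.
have m0 : mu != 0 by rewrite gt_eqF.
have -> : (2 * gamma)^-1 * (- gamma * (pa * pb + Nt0 * Xb) + - gamma * (pa * pb + Nt0 * Xb)
    + (- (beta * Nt0) * E + gamma * (pa * (pa - pb) + Nt0 * (Xa - Xb))
    + (- (beta * Nt0) * E + gamma * (pa * (pa - pb) + Nt0 * (Xa - Xb)))))
    + beta^-1 * (- (2 * beta * Nt0) * (Xa - Xb))
    = pa ^+ 2 - 2 * pa * pb - Nt0 * Xa - (beta * gamma^-1) * Nt0 * E.
  by field; rewrite g0 b0'.
have h1 : (beta * gamma^-1) * Nt0 * E >= 2 * mu^-1 * E + 2 * dotv p p * E.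
  rewrite hNt.
  have : 2 * mu^-1 * (1 + mu * dotv p p) * E <= (beta * gamma^-1) * (1 + mu * dotv p p) * E.
    by rewrite ler_wpM2r // ler_wpM2r // addr_ge0 // mulr_ge0 // ltW.
  have -> : 2 * mu^-1 * (1 + mu * dotv p p) * E = 2 * mu^-1 * E + 2 * dotv p p * E by field; rewrite ?m0.
  by [].
have h2 : Xa <= Nt0 * Xa.
  by rewrite hNt mulrDl mul1r lerDl mulr_ge0 // mulr_ge0 // ltW.
have h3 : 0 <= mu^-1 * E by rewrite mulr_ge0 // invr_ge0 ltW.
nra.
Qed.


Definition Sf (a : 'rV[R]_n) := \sum_(k < N) wk k * (dotv (phk k) a * dotv (phk k) a).

Lemma wk_ge0 k : 0 <= wk k.
Proof. by rewrite invr_ge0 addr_ge0 //; apply: mulr_ge0; [exact: ltW | exact: dv_ge0]. Qed.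

Lemma wk_le1 k : wk k <= 1.
Proof.
rewrite invf_le1 ?lerDl; first by apply: mulr_ge0; [exact: ltW | exact: dv_ge0].
by rewrite ltr_pwDl //; apply: mulr_ge0; [exact: ltW | exact: dv_ge0].
Qed.

Lemma Sf_ge0 a : 0 <= Sf a.
Proof.
by apply: sumr_ge0 => k _; apply: mulr_ge0; [exact: wk_ge0 | rewrite -expr2 sqr_ge0].
Qed.

Lemma LyapE a b : Lyap a b =
  (2 * gamma)^-1 * (dotv b b + dotv (a - b) (a - b)) + beta^-1 * Sf a.
Proof. by []. Qed.

Lemma Lyap_ge0 a b : 0 <= Lyap a b.
Proof.
rewrite LyapE; apply: addr_ge0; apply: mulr_ge0.
- by rewrite invr_ge0 mulr_ge0 // ltW.
- by rewrite addr_ge0 // dv_ge0.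
- by rewrite invr_ge0 ltW.
- exact: Sf_ge0.
Qed.

Lemma max_sq_le (x y z : R) : 0 <= x -> 0 <= y -> x ^+ 2 <= z -> y ^+ 2 <= z ->
  Num.max x y ^+ 2 <= z.
Proof. by move=> x0 y0 hx hy; case: (leP x y). Qed.

Lemma lowerL a b : Num.max `|a| `|b| ^+ 2 <= 4 * gamma * Lyap a b.
Proof.
have hb2 := norm_sq_le_dv b.
have he2 := norm_sq_le_dv (a - b).
have ha : `|a| <= `|a - b| + `|b|.
  by rewrite -{1}(subrK b a) ler_normD.
have ha2 : `|a| ^+ 2 <= 2 * (dotv b b + dotv (a - b) (a - b)).
  apply: (le_trans (y := (`|a - b| + `|b|) ^+ 2)).
    by rewrite lerXn2r ?nnegrE ?addr_ge0 ?normr_ge0.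
  have : 0 <= (`|a - b| - `|b|) ^+ 2 by rewrite sqr_ge0.
  nra.
have S0 := Sf_ge0 a.
have hL : 2 * (dotv b b + dotv (a - b) (a - b)) <= 4 * gamma * Lyap a b.
  have -> : 4 * gamma * Lyap a b = 2 * (dotv b b + dotv (a - b) (a - b))
     + 4 * gamma * (beta^-1 * Sf a).
    by rewrite LyapE; field; rewrite !gt_eqF.
  rewrite lerDl; apply: mulr_ge0; first by rewrite mulr_ge0 // ltW.
  by apply: mulr_ge0 => //; rewrite invr_ge0 ltW.
apply: max_sq_le => //.
  exact: le_trans ha2 hL.
apply: le_trans hL; apply: (le_trans hb2).
have := dv_ge0 (a - b); nra.
Qed.

Definition Phi := \sum_(k < N) dotv (phk k) (phk k).
Definition Cu := (2 * gamma)^-1 * (5 * n%:R) + beta^-1 * (Phi * n%:R).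

Lemma Cu_ge0 : 0 <= Cu.
Proof.
apply: addr_ge0; apply: mulr_ge0.
- by rewrite invr_ge0 mulr_ge0 // ltW.
- by rewrite mulr_ge0.
- by rewrite invr_ge0 ltW.
- by rewrite mulr_ge0 // sumr_ge0 // => k _; exact: dv_ge0.
Qed.

Lemma upperL a b : Lyap a b <= Cu * Num.max `|a| `|b| ^+ 2.
Proof.
set m := Num.max `|a| `|b|.
have am : `|a| <= m by rewrite le_max lexx.
have bm : `|b| <= m by rewrite le_max lexx orbT.
have m0 : 0 <= m by apply: le_trans am.
have n0 : 0 <= n%:R :> R by [].
have sq : forall u : R, 0 <= u -> u <= m -> u ^+ 2 <= m ^+ 2.
  by move=> u u0 um; rewrite lerXn2r ?nnegrE.
have hbb : dotv b b <= n%:R * m ^+ 2.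
  apply: (le_trans (dv_le_norm b)); apply: ler_wpM2l => //; apply: sq => //.
have hee : dotv (a - b) (a - b) <= 4 * n%:R * m ^+ 2.
  apply: (le_trans (dv_le_norm (a - b))).
  have h : `|a - b| <= 2 * m.
    apply: (le_trans (ler_normB _ _)); nra.
  have h2 : `|a - b| ^+ 2 <= (2 * m) ^+ 2 by rewrite lerXn2r ?nnegrE ?mulr_ge0.
  have : (2 * m) ^+ 2 = 4 * m ^+ 2 by ring.
  nra.
have haa : dotv a a <= n%:R * m ^+ 2.
  apply: (le_trans (dv_le_norm a)); apply: ler_wpM2l => //; apply: sq => //.
have hS : Sf a <= Phi * (n%:R * m ^+ 2).
  rewrite /Phi mulr_suml; apply: ler_sum => k _.
  apply: (le_trans (y := dotv (phk k) a * dotv (phk k) a)).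
    rewrite -[leRHS]mul1r; apply: ler_wpM2r; last exact: wk_le1.
    by rewrite -expr2 sqr_ge0.
  rewrite -expr2; apply: (le_trans (CS_dv _ _)).
  by apply: ler_wpM2l; [exact: dv_ge0 | exact: haa].
rewrite LyapE /Cu (mulrDl _ _ (m ^+ 2)).
apply: lerD.
  rewrite -mulrA; apply: ler_wpM2l; first by rewrite invr_ge0 mulr_ge0 // ltW.
  nra.
rewrite -mulrA; apply: ler_wpM2l; first by rewrite invr_ge0 ltW.
by rewrite -mulrA.
Qed.

Lemma Phi_ge0 : 0 <= Phi.
Proof. by apply: sumr_ge0 => k _; exact: dv_ge0. Qed.

Lemma coerc : \rank (data_matrix phi tk) = n ->
  exists K, 0 < K /\ forall a, dotv a a <= K * Sf a.
Proof.
move=> hr.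
have /row_freeP [B hB] : row_free (data_matrix phi tk) by rewrite /row_free hr.
set FB := \sum_(i < n) \sum_(k < N) B k i ^+ 2.
have FB0 : 0 <= FB by apply: sumr_ge0 => i _; apply: sumr_ge0 => k _; rewrite sqr_ge0.
exists ((FB + 1) * (1 + mu * Phi)); split.
  apply: mulr_gt0; first by rewrite ltr_pwDr.
  by rewrite ltr_pwDl // mulr_ge0 // ?Phi_ge0 // ltW.
move=> a.
set y := a *m data_matrix phi tk.
have hy : forall k, y 0 k = dotv (phk k) a.
  move=> k; rewrite /y mxE dvC; apply: eq_bigr => i _; rewrite mxE //.
have ha : a = y *m B by rewrite /y -mulmxA hB mulmx1.
have Y0 : 0 <= \sum_(k < N) y 0 k ^+ 2 by apply: sumr_ge0 => k _; rewrite sqr_ge0.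
have h1 : dotv a a <= FB * \sum_(k < N) y 0 k ^+ 2.
  rewrite {1 2}ha /dotv /FB mulr_suml; apply: ler_sum => i _.
  rewrite -expr2 mxE mulrC.
  have := CS_sum (fun k => y 0 k) (fun k => B k i).
  by [].
have h2 : \sum_(k < N) y 0 k ^+ 2 <= (1 + mu * Phi) * Sf a.
  rewrite /Sf mulr_sumr; apply: ler_sum => k _; rewrite hy.
  have hw : (1 + mu * dotv (phk k) (phk k)) * wk k = 1.
    rewrite /wk mulfV // gt_eqF // ltr_pwDl //.
    by apply: mulr_ge0; [exact: ltW | exact: dv_ge0].
  have hP : dotv (phk k) (phk k) <= Phi.
    rewrite /Phi (bigD1 k) //= lerDl sumr_ge0 // => j _; exact: dv_ge0.
  have c0 : 0 <= dotv (phk k) a * dotv (phk k) a by rewrite -expr2 sqr_ge0.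
  have w0 := wk_ge0 k.
  have -> : dotv (phk k) a ^+ 2 = (1 + mu * dotv (phk k) (phk k)) *
      (wk k * (dotv (phk k) a * dotv (phk k) a)) by rewrite mulrA hw mul1r expr2.
  apply: ler_wpM2r; first exact: mulr_ge0.
  by rewrite lerD2l ler_wpM2l // ltW.
apply: (le_trans h1).
rewrite -mulrA; apply: (le_trans (y := FB * ((1 + mu * Phi) * Sf a))).
  by apply: ler_wpM2l.
apply: ler_wpM2r; first by rewrite mulr_ge0 ?Sf_ge0 // addr_ge0 // mulr_ge0 // ?Phi_ge0 // ltW.
by rewrite lerDl.
Qed.


Definition kap K := (3 / (2 * gamma) * mu + (K / gamma + beta^-1))^-1.

Lemma A0 : 0 <= 3 / (2 * gamma) * mu.
Proof.
apply: mulr_ge0; last exact: ltW.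
apply: divr_ge0 => //; apply: mulr_ge0 => //; exact: ltW.
Qed.

Lemma cpos K : 0 < K -> 0 < 3 / (2 * gamma) * mu + (K / gamma + beta^-1).
Proof.
move=> K0.
have hA := A0.
have hB : 0 < K / gamma by rewrite divr_gt0.
have hC : 0 < beta^-1 by rewrite invr_gt0.
by apply: ltr_wpDl hA _; exact: addr_gt0.
Qed.

Lemma kap_gt0 K : 0 < K -> 0 < kap K.
Proof. by move=> K0; rewrite /kap invr_gt0 cpos. Qed.

Lemma dv_tri (a b : 'rV[R]_n) : dotv b b <= 2 * dotv a a + 2 * dotv (a - b) (a - b).
Proof.
have h := dv_ge0 (2%:R *: a - b).
rewrite !dvBr !dvBl !dvZr !dvZl (dvC b a) in h.
rewrite !dvBr !dvBl (dvC b a).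
nra.
Qed.

Lemma decay K : 0 < K -> (forall a, dotv a a <= K * Sf a) -> forall a b,
  - (mu^-1 * dotv (a - b) (a - b) + Sf a) <= - kap K * Lyap a b.
Proof.
move=> K0 hK a b.
have hbb := dv_tri a b.
have haa := hK a.
set E := dotv (a - b) (a - b).
have E0 : 0 <= E by apply: dv_ge0.
have S0 := Sf_ge0 a.
set c := 3 / (2 * gamma) * mu + (K / gamma + beta^-1).
have c0 : 0 < c by exact: cpos.
have hL : Lyap a b <= c * (mu^-1 * E + Sf a).
  rewrite LyapE /c.
  have g0 : gamma != 0 by rewrite gt_eqF.
  have b0 : beta != 0 by rewrite gt_eqF.
  have m0 : mu != 0 by rewrite gt_eqF.
  have -> : (3 / (2 * gamma) * mu + (K / gamma + beta^-1)) * (mu^-1 * E + Sf a)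
     = (2 * gamma)^-1 * (3 * E) + (K / gamma) * Sf a + beta^-1 * Sf a
       + (3 / (2 * gamma) * mu * Sf a + (K / gamma + beta^-1) * mu^-1 * E).
    by field; rewrite g0 b0 m0.
  have h1 : 0 <= 3 / (2 * gamma) * mu * Sf a + (K / gamma + beta^-1) * mu^-1 * E.
    apply: addr_ge0; apply: mulr_ge0 => //; first exact: A0.
    apply: mulr_ge0; last by rewrite invr_ge0 ltW.
    apply: addr_ge0; last by rewrite invr_ge0 ltW.
    by apply: divr_ge0; exact: ltW.
  have h2 : (2 * gamma)^-1 * (dotv b b + E) <= (2 * gamma)^-1 * (3 * E) + K / gamma * Sf a.
    have -> : K / gamma * Sf a = (2 * gamma)^-1 * (2 * K * Sf a) by field; rewrite g0.
    rewrite -mulrDr; apply: ler_wpM2l; first by rewrite invr_ge0 mulr_ge0 // ltW.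
    move: hbb; rewrite -/E => hbb; nra.
  have h3 := lerD h2 (lexx (beta^-1 * Sf a)).
  apply: (le_trans h3); rewrite lerDl //.
rewrite mulNr lerN2.
have kc : kap K * c = 1 by rewrite /kap -/c mulVf // gt_eqF.
have := ler_wpM2l (ltW (kap_gt0 K0)) hL.
by rewrite mulrA kc mul1r.
Qed.

Lemma cA (T : topologicalType) (f g : T -> R) x :
  {for x, continuous f} -> {for x, continuous g} -> {for x, continuous (fun q => f q + g q)}.
Proof. by move=> ? ?; exact: continuousD. Qed.

Lemma cK (T : topologicalType) (k : R) (f : T -> R) x :
  {for x, continuous f} -> {for x, continuous (fun q => k * f q)}.
Proof. by move=> ?; apply: (@continuousM _ _ (fun _ => k) f) => //; exact: cst_continuous. Qed.

Lemma cM (T : topologicalType) (f g : T -> R) x :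
  {for x, continuous f} -> {for x, continuous g} -> {for x, continuous (fun q => f q * g q)}.
Proof. by move=> ? ?; exact: continuousM. Qed.

Lemma cS (T : topologicalType) m (f : 'I_m -> T -> R) x :
  (forall i, {for x, continuous (f i)}) -> {for x, continuous (fun q => \sum_(i < m) f i q)}.
Proof.
move=> H; rewrite -fct_sumE.
elim/big_ind: _ => //.
- exact: (@cst_continuous _ _ (0:R) x).
- by move=> u v cu cv; exact: continuousD.
Qed.

Lemma Lyap_cont (T : topologicalType) (u v : T -> 'rV[R]_n) x :
  {for x, continuous u} -> {for x, continuous v} ->
  {for x, continuous (fun q => Lyap (u q) (v q))}.
Proof.
move=> cu cv.
have c3 : {for x, continuous (fun q => u q - v q)}.
  exact: (@continuousB _ _ _ u v).
rewrite /Lyap.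
apply: cA; apply: cK.
  by apply: cA; apply: cont_dv.
apply: cS => k; apply: cK; apply: cM; apply: cont_dv => //; exact: cst_continuous.
Qed.

Lemma Vf_cont : continuous Vf.
Proof.
move=> p.
have c1 : {for p, continuous (fun q : 'rV[R]_n * 'rV[R]_n => q.1 - ths)}.
  apply: (@continuousB _ _ _ (fun q : 'rV[R]_n * 'rV[R]_n => q.1) (fun _ => ths)).
    exact: cont_fst.
  exact: cst_continuous.
have c2 : {for p, continuous (fun q : 'rV[R]_n * 'rV[R]_n => q.2 - ths)}.
  apply: (@continuousB _ _ _ (fun q : 'rV[R]_n * 'rV[R]_n => q.2) (fun _ => ths)).
    exact: cont_snd.
  exact: cst_continuous.
exact: (Lyap_cont c1 c2).
Qed.

End Main.


Section Main2.
Variables (R : realType) (n N : nat) (ths : 'rV[R]_n)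
    (phi : R -> 'rV[R]_n) (tk : 'I_N -> R) (beta gamma mu : R).
Hypotheses (hb : 0 < beta) (hg : 0 < gamma) (hm : 0 < mu)
  (hbg : 2 * gamma / mu <= beta).

Local Notation Vf := (Vf ths phi tk beta gamma mu).
Local Notation Sf := (Sf phi tk mu).
Local Notation kap := (kap beta gamma mu).
Local Notation Draw := (Draw phi tk beta gamma mu).
Local Notation Lyap := (Lyap phi tk beta gamma mu).
Local Notation Cu := (Cu phi tk beta gamma).

Lemma sqle (a b : R) : 0 <= a -> 0 <= b -> a ^+ 2 <= b ^+ 2 -> a <= b.
Proof. by move=> a0 b0; rewrite ler_sqr // nnegrE. Qed.

Lemma decr K (K0 : 0 < K) (hK : forall a, dotv a a <= K * Sf a) (t0 : R)
  (x : R -> 'rV[R]_n * 'rV[R]_n) :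
  is_solution (sysF phi tk ths beta gamma mu) t0 x ->
  forall u v c, t0 <= u -> u <= v -> 0 <= c ->
  (forall r, u <= r -> r <= v -> c <= Vf (x r)) ->
  Vf (x v) + kap K * c * v <= Vf (x u) + kap K * c * u.
Proof.
move=> [cx dx] u v c tu uv c0 hc.
have [s hs] := dx (v + 1).
apply: (@nonincr_fin _ (fun r => Vf (x r) + kap K * c * r) s u v uv).
- have sub : `[u, v] `<=` `[t0, +oo[.
    move=> r /=; rewrite !in_itv /= andbT => /andP [h1 _].
    exact: le_trans tu h1.
  have cx' := continuous_subspaceW sub cx.
  have h1 : {within `[u, v], continuous (fun r => Vf (x r))}.
    by move=> r; exact: (continuous_comp (cx' r) (@Vf_cont R n N ths phi tk beta gamma mu (x r))).
  have h2 : {within `[u, v], continuous (fun r : R => kap K * c * r)}.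
    apply: continuous_subspaceT => r.
    first [ exact: (continuousM (@cst_continuous _ _ (kap K * c) r) (@cvg_id _ (nbhs r)))
          | apply: cvgMl_tmp; exact: cvg_id
          | exact: (@mulrl_continuous _ _ (kap K * c) r) ].
  by move=> r; exact: (continuousD (h1 r) (h2 r)).
- move=> t ut tv ts.
  have tt0 : t0 < t by exact: le_lt_trans tu ut.
  have tb : t < v + 1 by rewrite (lt_trans tv) // ltrDl.
  have D := hs t tt0 tb ts.
  exists (Draw ((x t).1 - ths) ((x t).2 - ths)
            (sysF phi tk ths beta gamma mu t (x t)).1
            (sysF phi tk ths beta gamma mu t (x t)).2 + kap K * c * 1).
  split.
    apply: dD; first exact: (deriv_V ths phi tk beta gamma mu D).
  have h1 := alg ths phi tk hb hg hm hbg t (x t).1 (x t).2.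
  have h2 := decay hb hg hm K0 hK ((x t).1 - ths) ((x t).2 - ths).
  have h3 : c <= Vf (x t) by apply: hc; exact: ltW.
  have k0 := kap_gt0 hb hg hm K0.
  have h4 : - kap K * Lyap ((x t).1 - ths) ((x t).2 - ths) <= - (kap K * c).
    by rewrite mulNr lerN2 ler_wpM2l // ltW.
  have h5 := le_trans h1 (le_trans h2 h4).
  rewrite mulr1; apply: (le_trans (lerD h5 (lexx (kap K * c)))).
  by rewrite addNr.
Qed.

Lemma main_UGAS : \rank (data_matrix phi tk) = n ->
  UGAS (sysF phi tk ths beta gamma mu) (ths, ths).
Proof.
move=> hr.
have [K [K0 hK]] := coerc hm hr.
have k0 := kap_gt0 hb hg hm K0.
have low : forall p, `|p - (ths, ths)| ^+ 2 <= 4 * gamma * Vf p.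
  by move=> p; rewrite prod_normE; exact: (lowerL phi tk hb hg hm (p.1 - ths) (p.2 - ths)).
have up : forall p, Vf p <= Cu * `|p - (ths, ths)| ^+ 2.
  by move=> p; rewrite prod_normE; exact: (upperL phi tk hb hg hm (p.1 - ths) (p.2 - ths)).
have V0 : forall p, 0 <= Vf p.
  by move=> p; exact: (Lyap_ge0 phi tk hb hg hm (p.1 - ths) (p.2 - ths)).
have Cu0 : 0 <= Cu by exact: Cu_ge0.
have mono : forall t0 x, is_solution (sysF phi tk ths beta gamma mu) t0 x ->
    forall u v, t0 <= u -> u <= v -> Vf (x v) <= Vf (x u).
  move=> t0 x hx u v tu uv.
  have := decr K0 hK hx tu uv (lexx 0) (fun r _ _ => V0 (x r)).
  by rewrite !mulr0 !mul0r !addr0.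
split.
- set K1 := 4 * gamma * Cu + 1.
  have K1ge : 4 * gamma * Cu <= K1 by rewrite lerDl.
  have g4 : 0 <= 4 * gamma * Cu by rewrite mulr_ge0 // mulr_ge0 // ltW.
  have K10 : 0 < K1 by rewrite ltr_pwDr.
  exists (fun r => K1 * r); split.
    split.
      apply: continuous_subspaceT => r.
      exact: (continuousM (@cst_continuous _ _ K1 r) (@cvg_id _ (nbhs r))).
    split; first by rewrite mulr0.
    split; first by move=> r s _ rs; rewrite ltr_pM2l.
    move=> M; exists (`|M| / K1); split; first by rewrite divr_ge0 // ltW.
    by rewrite mulrCA mulfV ?gt_eqF // mulr1 ler_norm.
  move=> t0 x t00 hx t tt.
  apply: sqle; [exact: normr_ge0 | by rewrite mulr_ge0 // ltW | ].
  have h1 := low (x t).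
  have h2 := mono t0 x hx t0 t (lexx t0) tt.
  have h3 := up (x t0).
  set a := `|x t - (ths, ths)| ^+ 2 in h1 *.
  set b := `|x t0 - (ths, ths)|.
  have b2 : 0 <= b ^+ 2 by rewrite sqr_ge0.
  rewrite exprMn.
  have K1ge1 : 1 <= K1 by rewrite /K1; lra.
  have hK1 : 4 * gamma * Cu <= K1 ^+ 2 by rewrite expr2; nra.
  have g0 : 0 <= 4 * gamma by rewrite mulr_ge0 // ltW.
  apply: (le_trans h1); apply: (le_trans (ler_wpM2l g0 h2)).
  apply: (le_trans (ler_wpM2l g0 h3)).
  rewrite mulrA; apply: ler_wpM2r => //.
- move=> r sig r0 s0.
  set c := sig ^+ 2 / (4 * gamma).
  have c0 : 0 < c by rewrite divr_gt0 ?exprn_gt0 // mulr_gt0.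
  have kc0 : 0 < kap K * c by rewrite mulr_gt0.
  set Q := Cu * r ^+ 2 / (kap K * c).
  have Q0 : 0 <= Q by apply: divr_ge0; [apply: mulr_ge0 => //; exact: sqr_ge0 | exact: ltW].
  have kQ : kap K * c * Q = Cu * r ^+ 2 by rewrite /Q mulrC divfK // gt_eqF.
  exists (Q + 1); split; first by rewrite ltr_pwDr.
  move=> t0 x t00 hx hr0 t ht.
  rewrite leNgt; apply/negP => hgt.
  have tt0 : t0 <= t by apply: le_trans ht; rewrite lerDl addr_ge0.
  have Vt : c <= Vf (x t).
    rewrite /c ler_pdivrMr ?mulr_gt0 // mulrC.
    apply: le_trans (low (x t)).
    by rewrite lerXn2r ?nnegrE ?normr_ge0 ?(ltW s0) // ltW.
  have hc : forall s, t0 <= s -> s <= t -> c <= Vf (x s).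
    by move=> s h1 h2; apply: (le_trans Vt); exact: mono hx s t h1 h2.
  have := decr K0 hK hx (lexx t0) tt0 (ltW c0) hc.
  have h0 := up (x t0).
  have hr2 : `|x t0 - (ths, ths)| ^+ 2 <= r ^+ 2.
    by rewrite lerXn2r ?nnegrE ?normr_ge0 ?(ltW r0).
  have h4 : Vf (x t0) <= Cu * r ^+ 2 by apply: (le_trans h0); exact: ler_wpM2l.
  have h5 := V0 (x t).
  have h6 : kap K * c * (Q + 1) <= kap K * c * (t - t0).
    apply: ler_wpM2l; first exact: ltW.
    by move: ht; lra.
  rewrite mulrDr mulr1 kQ in h6.
  nra.
Qed.

End Main2.

Unset Implicit Arguments. Set Strict Implicit.
Local Close Scope classical_set_scope.
Local Open Scope ring_scope.

Theorem theorem3 (R : realType) (n N : nat) (ths : 'rV[R]_n)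
    (phi : R -> 'rV[R]_n) (tk : 'I_N -> R) (beta gamma mu : R) :
  pw_continuous phi ->
  bounded_on_nonneg phi ->
  (forall k, 0 <= tk k) ->
  \rank (data_matrix phi tk) = n ->
  0 < beta -> 0 < gamma -> 0 < mu ->
  2 * gamma / mu <= beta ->
  UGAS (sysF phi tk ths beta gamma mu) (ths, ths).
Proof.
move=> _ _ _ hr hb hg hm hbg.
exact: main_UGAS.
Qed.
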